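(* The size $z_{SSsr}$ of the self-referencing LZSS factorization satisfies (the alphabet being allowed to contain as many distinct characters as needed): substitutions: $\liminf_{n\to\infty}\mathsf{MS}_{\mathrm{sub}}(z_{SSsr},n)\ge 3$, $\mathsf{AS}_{\mathrm{sub}}(z_{SSsr},n)\ge 2z_{SSsr}-\Theta(\sqrt{z_{SSsr}})$ and $\mathsf{AS}_{\mathrm{sub}}(z_{SSsr},n)=\Omega(\sqrt n)$; insertions: $\liminf_{n\to\infty}\mathsf{MS}_{\mathrm{ins}}(z_{SSsr},n)\ge 2$, $\mathsf{AS}_{\mathrm{ins}}(z_{SSsr},n)\ge z_{SSsr}-\Theta(\sqrt{z_{SSsr}})$ and $\mathsf{AS}_{\mathrm{ins}}(z_{SSsr},n)=\Omega(\sqrt n)$; deletions: $\liminf_{n\to\infty}\mathsf{MS}_{\mathrm{del}}(z_{SSsr},n)\ge 3$, $\mathsf{AS}_{\mathrm{del}}(z_{SSsr},n)\ge 2z_{SSsr}-\Theta(\sqrt{z_{SSsr}})$ and $\mathsf{AS}_{\mathrm{del}}(z_{SSsr},n)=\Omega(\sqrt n)$.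
   Context: $\mathsf{ed}$ is the edit distance. $\mathsf{MS}_{\mathrm{sub}}(C,n)=\max_{T\in\Sigma^n}\{C(T')/C(T): T'\in\Sigma^n,\ \mathsf{ed}(T,T')=1\}$, with $\mathsf{MS}_{\mathrm{ins}},\mathsf{MS}_{\mathrm{del}}$ analogous for $T'$ of length $n+1$, resp. $n-1$, and $\mathsf{AS}_\ast$ analogous with $C(T')-C(T)$. Bounds in terms of $z_{SSsr}$ refer to $z_{SSsr}(T)$ of the original string and assert existence of strings $T$ (with $z_{SSsr}(T)$ arbitrarily large) and edited $T'$ achieving them. The self-referencing LZSS factorization of $T$ is $T=f_1\cdots f_z$ where each $f_i$ is either the first occurrence in $T$ of a character, or the longest prefix of $f_i\cdots f_z$ that occurs at least twice in $f_1\cdots f_i$ (occurrences may overlap); $z_{SSsr}(T)=z$. *)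

(* Defs.v *)
From mathcomp Require Import all_boot.
From Stdlib Require Import Reals.

Set Implicit Arguments.
Unset Strict Implicit.
Unset Printing Implicit Defensive.

Notation string := (seq nat).

Fixpoint ed (s t : string) {struct s} : nat :=
  match s with
  | [::] => size t
  | x :: s' =>
      (fix ed_s (t : string) : nat :=
         match t with
         | [::] => size s
         | y :: t' => minn (minn (ed s' t).+1 (ed_s t').+1) (ed s' t' + (x != y))
         end) t
  end.

Definition occ_count (u t : string) : nat :=
  count (fun q => take (size u) (drop q t) == u) (iota 0 (size t)).

(* Length of the self-referencing LZSS factor starting at position p of T
   (T[0..p) already factorized):
   - 1 if T[p] is the first occurrence of that character in T;
   - otherwise the length l of the longest prefix of T[p..] that occurs at
     least twice in T[0..p+l) (= f_1 ... f_i; occurrences may overlap). *)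
Definition lzss_flen (T : string) (p : nat) : nat :=
  let s := drop p T in
  if nth 0 T p \notin take p T then 1
  else foldr maxn 0
         [seq l <- iota 0 (size s).+1 | 2 <= occ_count (take l s) (take (p + l) T)].

Fixpoint lzss_count (fuel : nat) (T : string) (p : nat) : nat :=
  match fuel with
  | 0 => 0
  | fuel'.+1 =>
      if p < size T then (lzss_count fuel' T (p + lzss_flen T p)).+1 else 0
  end.

(* z_SSsr(T): number of factors of the self-referencing LZSS factorization.
   Every factor has length >= 1, so size T is enough fuel. *)
Definition zSSsr (T : string) : nat := lzss_count (size T) T 0.

(* Main.v *)
Require Import Defs.
From mathcomp Require Import all_boot.
From Stdlib Require Import Reals.
From mathcomp Require Import zify.
From Stdlib Require Import PeanoNat Lra.
Set Implicit Arguments.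
Unset Strict Implicit.
Unset Printing Implicit Defensive.


Definition matchat (T : seq nat) (q p l : nat) :=
  forall i, i < l -> nth 0 T (q + i) = nth 0 T (p + i).

Lemma foldr_maxn_ge (s : seq nat) x : x \in s -> x <= foldr maxn 0 s.
Proof.
elim: s => //= y s IH; rewrite inE => /orP [/eqP->|/IH h]; first exact: leq_maxl.
exact: leq_trans h (leq_maxr _ _).
Qed.

Lemma foldr_maxn_mem (s : seq nat) : foldr maxn 0 s = 0 \/ foldr maxn 0 s \in s.
Proof.
elim: s => [|y s IH] /=; first by left.
right; rewrite /maxn; case: ltnP => h.
- case: IH => [e|m]; last by rewrite inE m orbT.
  by move: h; rewrite e.
- by rewrite inE eqxx.
Qed.

Lemma foldr_maxn_le (s : seq nat) B : (forall x, x \in s -> x <= B) -> foldr maxn 0 s <= B.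
Proof.
elim: s => //= y s IH h; rewrite geq_max h ?inE ?eqxx //=.
by apply: IH => x hx; apply: h; rewrite inE hx orbT.
Qed.

Lemma occ_P (T : seq nat) p l q :
  p + l <= size T -> 1 <= l -> q < p -> matchat T q p l ->
  2 <= occ_count (take l (drop p T)) (take (p + l) T).
Proof.
move=> hs hl hq hm.
have szt : size (take (p + l) T) = p + l by rewrite size_take; case: ltnP => //; lia.
have szu : size (take l (drop p T)) = l by rewrite size_take size_drop; case: ltnP => //; lia.
rewrite /occ_count szt szu.
rewrite (_ : iota 0 (p + l) = iota 0 p ++ iota p (l - 1).+1); last first.
  by rewrite -iotaD; congr iota; lia.
rewrite count_cat /=.
apply: (@leq_add 1 1).
- rewrite -has_count; apply/hasP; exists q; first by rewrite mem_iota; lia.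
  apply/eqP; apply: (@eq_from_nth _ 0).
  + rewrite szu size_take size_drop szt; case: ltnP => //; lia.
  + move=> i; rewrite size_take size_drop szt => hi.
    have hil : i < l by move: hi; case: ifP => h; lia.
    rewrite !nth_take // !nth_drop nth_take; last lia.
    exact: hm.
- apply: leq_trans (leq_addr _ _).
  have -> : take l (drop p (take (p + l) T)) = take l (drop p T).
    by rewrite addnC -take_drop take_takel.
  by rewrite eqxx.
Qed.


Lemma P_occ (T : seq nat) p l : p + l <= size T -> 1 <= l ->
  2 <= occ_count (take l (drop p T)) (take (p + l) T) ->
  exists q, q < p /\ matchat T q p l.
Proof.
move=> hs hl.
have szt : size (take (p + l) T) = p + l by rewrite size_take; case: ltnP => //; lia.
have szu : size (take l (drop p T)) = l by rewrite size_take size_drop; case: ltnP => //; lia.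
rewrite /occ_count szt szu.
set P := (fun q => _ == _).
case: (boolP (has (fun q => (q < p) && P q) (iota 0 (p + l)))).
  move=> /hasP [q _ /andP [hq /eqP hP]]; exists q; split => // i hi.
  have := congr1 (fun s => nth 0 s i) hP => /=.
  rewrite !nth_take // !nth_drop nth_take //; lia.
move=> /hasPn hn.
have sub : subpred P (pred1 p).
  move=> q /eqP hP /=; apply/eqP.
  case: (ltngtP q p) => // h.
  - have : q \in iota 0 (p + l) by rewrite mem_iota; lia.
    by move/hn; rewrite h /P hP eqxx.
  - have := congr1 size hP; rewrite szu size_take size_drop szt; case: ifP; lia.
move=> h2; have := leq_trans h2 (sub_count sub (iota 0 (p + l))).
rewrite (count_uniq_mem p (iota_uniq 0 (p + l))).
by case: (_ \in _).
Qed.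

Lemma notfresh_occ (T : seq nat) p : nth 0 T p \in take p T ->
  exists q, q < p /\ nth 0 T q = nth 0 T p.
Proof.
move=> h; exists (index (nth 0 T p) (take p T)); split.
- have := index_mem (nth 0 T p) (take p T); rewrite h => hh.
  apply: leq_trans hh _; rewrite size_take; case: ifP => //; lia.
- have hl := index_mem (nth 0 T p) (take p T); rewrite h in hl.
  have := nth_index 0 h; rewrite nth_take //.
  apply: leq_trans hl _; rewrite size_take; case: ifP => //; lia.
Qed.

Lemma flenE (T : seq nat) p : lzss_flen T p =
  if nth 0 T p \notin take p T then 1 else foldr maxn 0
    [seq l <- iota 0 (size (drop p T)).+1 | 2 <= occ_count (take l (drop p T)) (take (p + l) T)].
Proof. by []. Qed.

Lemma flen_ge1 (T : seq nat) p : p < size T -> 1 <= lzss_flen T p.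
Proof.
move=> hp; rewrite flenE; case: ifP => // /negbFE h.
apply: foldr_maxn_ge.
  rewrite mem_filter mem_iota size_drop /=; apply/andP; split; last lia.
  have [q [hq e]] := notfresh_occ h.
  apply: (occ_P (q := q)) => //; first lia.
  move=> i hi; have -> : i = 0 by lia.
by rewrite !addn0.
Qed.

Lemma flen_le (T : seq nat) p : p < size T -> p + lzss_flen T p <= size T.
Proof.
move=> hp; rewrite flenE; case: ifP => _; first lia.
have : foldr maxn 0 [seq l <- iota 0 (size (drop p T)).+1
   | 1 < occ_count (take l (drop p T)) (take (p + l) T)] <= size T - p.
  apply: foldr_maxn_le => x; rewrite mem_filter mem_iota size_drop => /andP [_ h]; lia.
lia.
Qed.

Lemma flen_max (T : seq nat) p e : p < size T -> p < e -> e <= size T ->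
  (exists q, q < p /\ matchat T q p (e - p)) -> e <= p + lzss_flen T p.
Proof.
move=> hp hpe heT [q [hq hm]]; rewrite flenE; case: ifP => [/negP h|_].
  exfalso; apply: h.
  have e0 : nth 0 T q = nth 0 T p by have := hm 0; rewrite !addn0; apply; lia.
  rewrite -e0 -(nth_take 0 hq); apply: mem_nth.
  by rewrite size_take; case: ifP => _ //; exact: ltn_trans hq hp.
suff : e - p <= foldr maxn 0 [seq l <- iota 0 (size (drop p T)).+1
   | 1 < occ_count (take l (drop p T)) (take (p + l) T)] by lia.
apply: foldr_maxn_ge; rewrite mem_filter mem_iota size_drop; apply/andP; split; last lia.
apply: (occ_P (q := q)) => //; lia.
Qed.

Lemma flen_occ (T : seq nat) p : p < size T -> 2 <= lzss_flen T p ->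
  exists q, q < p /\ matchat T q p (lzss_flen T p).
Proof.
move=> hp h2; have hle := flen_le hp; move: h2 hle; rewrite flenE; case: ifP => // _.
case: (foldr_maxn_mem [seq l <- iota 0 (size (drop p T)).+1
   | 1 < occ_count (take l (drop p T)) (take (p + l) T)]) => [->//|].
set l := foldr maxn 0 _; rewrite mem_filter => /andP [ho _] h2 hle.
apply: P_occ => //; lia.
Qed.


Definition valid (T : seq nat) p e :=
  e = p.+1 \/ exists q, q < p /\ matchat T q p (e - p).

Inductive seg (T : seq nat) : nat -> nat -> nat -> Prop :=
| seg0 p : seg T p p 0
| segS p e f m : p < e -> valid T p e -> seg T e f m -> seg T p f m.+1.

Lemma seg_le T p f m : seg T p f m -> p <= f.
Proof. by elim=> // p0 e f0 m0 h1 _ _ h2; lia. Qed.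

Lemma seg_cat T p e f m1 m2 : seg T p e m1 -> seg T e f m2 -> seg T p f (m1 + m2).
Proof.
elim=> // p0 e0 f0 m0 h1 h2 _ IH h3; rewrite addSn; apply: segS h1 h2 _; exact: IH.
Qed.

Lemma valid_shift T p p' e : valid T p e -> p <= p' -> p' < e -> valid T p' e.
Proof.
move=> [->|[q [hq hm]]] h1 h2; first by left; lia.
right; exists (q + (p' - p)); split; first lia.
move=> i hi; have := hm (p' - p + i); rewrite !addnA.
have -> : p + (p' - p) = p' by lia.
by apply; lia.
Qed.

Lemma count_le_seg T fuel p' p f m : seg T p f m -> f = size T -> p <= p' ->
  lzss_count fuel T p' <= m.
Proof.
move=> hs; elim: hs fuel p' => [p0|p0 e f0 m0 hpe hv hs IH] fuel p' hf hp.
  by case: fuel => //= fuel; rewrite ltnNge (_ : size T <= p') //; lia.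
case: fuel => //= fuel; case: ifP => // hp'.
case: (ltnP p' e) => he.
- have hle := seg_le hs.
  have hv' := valid_shift hv hp he.
  have : e <= p' + lzss_flen T p'.
    case: hv' => [->|]; first by have := flen_ge1 hp'; lia.
    by apply: flen_max => //; lia.
  by move=> h; have := IH fuel _ hf h; lia.
- by have := IH fuel.+1 p' hf he; rewrite /= hp'; lia.
Qed.

Lemma zSSsr_ub T m : seg T 0 (size T) m -> zSSsr T <= m.
Proof. by move=> h; apply: count_le_seg h _ _. Qed.

Fixpoint sl (fuel : nat) (T : seq nat) (p : nat) : seq nat :=
  match fuel with
  | 0 => [::]
  | fuel'.+1 => if p < size T then p :: sl fuel' T (p + lzss_flen T p) else [::]
  end.

Lemma sl_count fuel T p : lzss_count fuel T p = size (sl fuel T p).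
Proof. by elim: fuel p => //= fuel IH p; case: ifP => //= _; rewrite IH. Qed.

Lemma sl_cover T fuel p x : p <= x -> x < size T -> size T <= p + fuel ->
  exists y, y \in sl fuel T p /\ y <= x < y + lzss_flen T y.
Proof.
elim: fuel p => [|fuel IH] p h1 h2 h3; first lia.
have hp : p < size T by lia.
rewrite /= hp; case: (ltnP x (p + lzss_flen T p)) => hx.
  by exists p; rewrite inE eqxx; split => //; lia.
have := flen_ge1 hp => hg.
have [y [hy1 hy2]] := IH _ hx h2 (ltac:(lia)).
by exists y; rewrite inE hy1 orbT.
Qed.

Lemma noocc_start T x l : 1 <= l -> x + l < size T ->
  (forall q, q < x -> ~ matchat T q x l.+1) ->
  exists y, y \in sl (size T) T 0 /\ x < y <= x + l.
Proof.
move=> hl hs hno.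
have [y [hy /andP [h1 h2]]] := sl_cover (fuel := size T) (p := 0) (x := x + l) (leq0n _) hs (leqnn _).
case: (ltnP x y) => hxy; first by exists y; split => //; lia.
have hy' : y < size T by lia.
have [q0 [hq0 hm]] := flen_occ hy' (ltac:(lia)).
exfalso; apply: (hno (q0 + (x - y))); first lia.
move=> i hi; have := hm (x - y + i); rewrite !addnA.
have -> : y + (x - y) = x by lia.
by apply; lia.
Qed.

Definition cnt (s : seq nat) lo hi := count (fun y => (lo <= y) && (y < hi)) s.

Lemma cnt_split s lo mid hi : lo <= mid -> mid <= hi ->
  cnt s lo hi = cnt s lo mid + cnt s mid hi.
Proof.
move=> h1 h2; rewrite /cnt; elim: s => //= y s ->.
case: (ltnP y lo) => a; case: (ltnP y mid) => b; case: (ltnP y hi) => c /=; lia.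
Qed.

Lemma cnt_mem s lo hi y : y \in s -> lo <= y -> y < hi -> 0 < cnt s lo hi.
Proof.
move=> hy h1 h2; rewrite /cnt -has_count; apply/hasP; exists y => //; by rewrite /= h1 h2.
Qed.

Lemma cnt_size s lo hi : cnt s lo hi <= size s.
Proof. exact: count_size. Qed.


Definition Lch s i := 3 * ((s * s - 1 - i) %/ s).
Definition spch s k o :=
  if o < k then 3 * ((k - 1 - o) %/ s) else if o == k then 2 else 3 * ((o - k - 1) %% s) + 1.
Definition tailch s j :=
  if j < s * s then 3 * (j %% s) + 1 else
  let k := Nat.sqrt (j - s * s).+1 in
  if k <= s * s then spch s k ((j - s * s).+1 - k * k) else 8.
Definition chr (M : seq nat) s i :=
  if i < s * s then Lch s i else
  if i < s * s + size M then nth 0 M (i - s * s) else tailch s (i - s * s - size M).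
Definition base (M : seq nat) s := s * s + size M + s * s.
Definition apos (M : seq nat) s k := base M s + k * k - 1.
Definition n0 (M : seq nat) s := apos M s (s * s).+1.

Lemma chr_L M s i : i < s * s -> chr M s i = Lch s i.
Proof. by move=> h; rewrite /chr h. Qed.

Lemma chr_M M s i : s * s <= i -> i < s * s + size M -> chr M s i = nth 0 M (i - s * s).
Proof. by move=> h1 h2; rewrite /chr h2; case: ifP => //; lia. Qed.

Lemma chr_T M s i : s * s + size M <= i -> chr M s i = tailch s (i - s * s - size M).
Proof. by move=> h1; rewrite /chr; do 2 (case: ifP => ?; first lia). Qed.

Lemma chr_R M s i : s * s + size M <= i -> i < base M s ->
  chr M s i = 3 * ((i - s * s - size M) %% s) + 1.
Proof.
rewrite /base => h1 h2; rewrite chr_T // /tailch; case: ifP => //; lia.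
Qed.

Lemma tail_span s j : s * s <= j -> tailch s j =
  let k := Nat.sqrt (j - s * s).+1 in
  if k <= s * s then spch s k ((j - s * s).+1 - k * k) else 8.
Proof. by move=> h; rewrite /tailch; case: ifP => //; lia. Qed.

Lemma chr_span M s k o : 1 <= k -> k <= s * s -> o <= 2 * k ->
  chr M s (apos M s k + o) = spch s k o.
Proof.
move=> h1 h2 h3; rewrite /apos /base.
have hk : 1 <= k * k by nia.
rewrite chr_T; last lia.
rewrite tail_span; last lia.
have -> : (s * s + size M + s * s + k * k - 1 + o - s * s - size M - s * s).+1 = k * k + o by lia.
have -> : Nat.sqrt (k * k + o) = k by apply: Nat.sqrt_unique; nia.
by rewrite /= h2; congr spch; lia.
Qed.

Lemma chr_pad M s i : n0 M s <= i -> chr M s i = 8.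
Proof.
rewrite /n0 /apos /base => h.
rewrite chr_T; last lia.
rewrite tail_span; last lia.
set r := (_ - _).+1.
have hr : (s * s).+1 * (s * s).+1 <= r by rewrite /r; lia.
have := Nat.sqrt_spec r (Nat.le_0_l _).
set k := Nat.sqrt r => hk.
rewrite /= ifF //; apply/negbTE; rewrite -ltnNge.
have : ~ (k.+1 <= (s * s).+1) by nia.
lia.
Qed.

Lemma span_decomp M s i : base M s <= i -> i < n0 M s ->
  exists k o, [/\ 1 <= k, k <= s * s, o <= 2 * k & i = apos M s k + o].
Proof.
rewrite /n0 /apos => h1 h2.
set r := (i - base M s).+1.
have := Nat.sqrt_spec r (Nat.le_0_l _).
set k := Nat.sqrt r => hk.
exists k, (r - k * k).
have k1 : 1 <= k by nia.
have k2 : k <= s * s by nia.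
split => //; nia.
Qed.


Lemma Lch_mod s i : Lch s i %% 3 = 0.
Proof. rewrite /Lch; lia. Qed.

Lemma spch_mod0 s k o : o < k -> spch s k o %% 3 = 0.
Proof. by move=> h; rewrite /spch h; lia. Qed.

Lemma spch_c s k : spch s k k = 2.
Proof. by rewrite /spch ltnn eqxx. Qed.

Lemma spch_mod1 s k o : k < o -> spch s k o %% 3 = 1.
Proof.
move=> h; rewrite /spch ifF; last lia.
rewrite ifF; last by apply/negbTE; rewrite neq_ltn h orbT.
lia.
Qed.

Lemma apos_lt M s j k : 0 < s -> j < k -> apos M s j < apos M s k.
Proof. rewrite /apos /base => s0 h; nia. Qed.

Lemma apos_le M s j k : j <= k -> apos M s j <= apos M s k.
Proof. rewrite /apos /base => h; nia. Qed.

Lemma apos_S M s j : 1 <= j -> apos M s j + 2 * j + 1 = apos M s j.+1.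
Proof. rewrite /apos => h; nia. Qed.

Section S.
Variables (M : seq nat) (s : nat).
Hypothesis s0 : 0 < s.
Hypothesis HM : all (fun x => x %% 3 == 2) M.

Lemma M_mod t : t < size M -> nth 0 M t %% 3 = 2.
Proof. by move=> h; have := allP HM _ (mem_nth 0 h) => /eqP. Qed.

Lemma BA q : q.+1 < n0 M s -> chr M s q %% 3 = 1 -> chr M s q.+1 %% 3 = 0 ->
  exists k, [/\ 1 <= k, k <= s * s & q.+1 = apos M s k].
Proof.
move=> hn h1 h2.
case: (ltnP q (s * s)) => c1; first by move: h1; rewrite chr_L // Lch_mod.
case: (ltnP q (s * s + size M)) => c2.
  by move: h1; rewrite chr_M // M_mod //; lia.
case: (ltnP q (base M s)) => c3.
  case: (ltnP q.+1 (base M s)) => c4.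
    by move: h2; rewrite chr_R //; lia.
  exists 1; split => //; first nia.
  by rewrite /apos; lia.
have [j [o [j1 j2 jo eq]]] := span_decomp c3 (ltac:(lia)); subst q.
move: h1 h2; rewrite chr_span //.
case: (ltngtP o j) => oj; first by rewrite spch_mod0.
- move=> _; case: (ltnP o (2 * j)) => o2.
    by rewrite -addnS chr_span // spch_mod1 //; lia.
  have eo : o = 2 * j by lia.
  move=> _; exists j.+1; split => //.
  + have : apos M s j.+1 < n0 M s by rewrite -apos_S // -eo; lia.
    rewrite /n0 => h; case: (ltnP (s * s) j.+1) => // hh.
    have := apos_le M s (ltac:(lia) : (s * s).+1 <= j.+1); lia.
  + by rewrite -apos_S // eo; lia.
- by rewrite oj spch_c.
Qed.

Lemma pair_at k : 1 <= k -> k <= s * s ->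
  chr M s (apos M s k - 1) = 3 * ((k + s - 2) %% s) + 1 /\
  chr M s (apos M s k) = 3 * ((k - 1) %/ s).
Proof.
move=> k1 k2; split; last first.
  by have := chr_span M (o := 0) k1 k2 (leq0n _); rewrite addn0 => ->; rewrite /spch k1 subn0.
case: (ltnP 1 k) => kk.
- have e : apos M s k - 1 = apos M s k.-1 + 2 * k.-1.
    have e0 := apos_S M s (ltac:(lia) : 1 <= k.-1).
    rewrite prednK in e0; lia.
  rewrite e chr_span; try lia.
  rewrite /spch ifF; last lia.
  rewrite ifF; last by apply/negbTE; rewrite neq_ltn; apply/orP; right; lia.
  have -> : k + s - 2 = (k - 2) + s by lia.
  rewrite modnDr; congr (3 * (_ %% s) + 1); lia.
- have k1' : k = 1 by lia.
  subst k; rewrite chr_R /apos /base; try nia.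
  have -> : s * s + size M + s * s + 1 * 1 - 1 - 1 - s * s - size M = (s - 1) * s + (s - 1) by nia.
  rewrite modnMDl; congr (3 * (_ %% s) + 1); lia.
Qed.

Lemma pair_inj j k : 1 <= j -> 1 <= k ->
  3 * ((j + s - 2) %% s) + 1 = 3 * ((k + s - 2) %% s) + 1 ->
  3 * ((j - 1) %/ s) = 3 * ((k - 1) %/ s) -> j = k.
Proof.
move=> j1 k1 e1 e2.
have m1 : (j + s - 2) %% s = (k + s - 2) %% s by lia.
have d1 : (j - 1) %/ s = (k - 1) %/ s by lia.
have : (j - 1) + (s - 1) = (k - 1) + (s - 1) %[mod s].
  rewrite (_ : j - 1 + (s - 1) = j + s - 2); last lia.
  by rewrite (_ : k - 1 + (s - 1) = k + s - 2); last lia.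
move/eqP; rewrite eqn_modDr => /eqP m2.
have := divn_eq (j - 1) s; have := divn_eq (k - 1) s; rewrite d1 m2; lia.
Qed.

Lemma where2 p : p < n0 M s -> chr M s p = 2 ->
  (s * s <= p /\ p < s * s + size M) \/ exists j, [/\ 1 <= j, j <= s * s & p = apos M s j + j].
Proof.
move=> hn h.
case: (ltnP p (s * s)) => c1; first by move: h; rewrite chr_L // => hh; have := Lch_mod s p; rewrite hh.
case: (ltnP p (s * s + size M)) => c2; first by left.
case: (ltnP p (base M s)) => c3; first by move: h; rewrite chr_R //; lia.
have [j [o [j1 j2 jo eq]]] := span_decomp c3 hn; subst p.
right; exists j; split => //.
move: h; rewrite chr_span //.
case: (ltngtP o j) => oj; first by move=> hh; have := spch_mod0 s oj; rewrite hh.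
- by move=> hh; have := spch_mod1 s oj; rewrite hh.
- by rewrite oj.
Qed.

Lemma noA k : 1 <= k -> k <= s * s -> forall q, q < apos M s k - 1 ->
  ~ (chr M s q = chr M s (apos M s k - 1) /\ chr M s q.+1 = chr M s (apos M s k)).
Proof.
move=> k1 k2 q hq [e1 e2].
have [pa pb] := pair_at k1 k2.
have hn : q.+1 < n0 M s.
  have := apos_lt M s0 (ltac:(lia) : k < (s * s).+1); rewrite /n0; lia.
have [j [j1 j2 ej]] := BA hn (ltac:(rewrite e1 pa; lia)) (ltac:(rewrite e2 pb; lia)).
have [qa qb] := pair_at j1 j2.
have eq : q = apos M s j - 1 by lia.
have := pair_inj j1 k1 (ltac:(by rewrite -qa -pa -e1 eq)) (ltac:(by rewrite -qb -pb -e2 ej)).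
move=> ejk; subst j; lia.
Qed.

Lemma noB k : (forall t, t < size M -> nth 0 M t = 2 -> 0 < t) ->
  1 <= k -> k <= s * s -> forall q, q < apos M s k ->
  ~ (forall i, i <= k -> chr M s (q + i) = chr M s (apos M s k + i)).
Proof.
move=> hM k1 k2 q hq h.
have hk := h k (leqnn _); rewrite chr_span in hk; try lia.
rewrite spch_c in hk.
have hn : q + k < n0 M s.
  have := apos_le M s (ltac:(lia) : k.+1 <= (s * s).+1); have := apos_S M s k1; rewrite /n0; lia.
case: (where2 hn hk) => [[c1 c2]|[j [j1 j2 ej]]].
- have := hk; rewrite chr_M // => ht.
  have t0 := hM (q + k - s * s) (ltac:(lia)) ht.
  have e := h k.-1 (leq_pred _).
  rewrite chr_span in e; try lia.
  rewrite chr_M in e; try lia.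
  have := spch_mod0 s (ltac:(lia) : k.-1 < k); rewrite -e M_mod; lia.
- have jk : j < k.
    case: (ltnP j k) => // kj; have := apos_le M s kj; lia.
  have := h (k - j - 1) (ltac:(lia)).
  have -> : q + (k - j - 1) = apos M s j - 1 by have := apos_le M s (leq0n 0); lia.
  have [pa _] := pair_at j1 j2; rewrite pa chr_span; try lia.
  move=> e; have := spch_mod0 s (ltac:(lia) : k - j - 1 < k); rewrite -e; lia.
Qed.

Lemma noC k : (forall t, t < size M -> nth 0 M t != 2) ->
  1 <= k -> k <= s * s -> forall q, q < apos M s k + k ->
  ~ (forall i, i <= k -> chr M s (q + i) = chr M s (apos M s k + k + i)).
Proof.
move=> hM k1 k2 q hq h.
have h0 := h 0 (leq0n _); rewrite !addn0 chr_span in h0; try lia.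
rewrite spch_c in h0.
have hn : q < n0 M s.
  have := apos_le M s (ltac:(lia) : k.+1 <= (s * s).+1); have := apos_S M s k1; rewrite /n0; lia.
case: (where2 hn h0) => [[c1 c2]|[j [j1 j2 ej]]].
- by move: h0; rewrite chr_M //; move/eqP; rewrite (negbTE (hM _ _)) //; lia.
- have jk : j < k.
    case: (ltnP j k) => // kj; have := apos_le M s kj; lia.
  have := h j.+1 jk; rewrite ej.
  have -> : apos M s j + j + j.+1 = apos M s j.+1 + 0 by have := apos_S M s j1; lia.
  rewrite -addnA chr_span // ?chr_span //; try lia.
  rewrite /spch ltn0Sn subn0.
  move=> e; have := spch_mod1 s (ltac:(lia) : k < k + j.+1); rewrite /spch -e; lia.
Qed.
End S.


Lemma lb_sum (c K : nat) (s : seq nat) (f : nat -> nat) :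
  (forall k, f k <= f k.+1) ->
  (forall k, 1 <= k -> k <= K -> c <= cnt s (f k) (f k.+1)) -> c * K <= cnt s (f 1) (f K.+1).
Proof.
move=> hf; elim: K => [|K IH] h; first by rewrite muln0.
have h1 : f 1 <= f K.+1.
  elim: K {IH h} => // K IH2; exact: leq_trans IH2 (hf _).
rewrite (cnt_split s h1 (hf _)) mulnS addnC leq_add //.
- by apply: IH => k k1 k2; apply: h; lia.
- by apply: h.
Qed.

Section LB.
Variables (M : seq nat) (s n : nat).
Hypothesis s0 : 0 < s.
Hypothesis HM : all (fun x => x %% 3 == 2) M.
Hypothesis hn : n0 M s <= n.
Let T := mkseq (chr M s) n.
Let S := sl (size T) T 0.

Lemma nthT i : i < n -> nth 0 T i = chr M s i.
Proof. by move=> h; rewrite /T nth_mkseq. Qed.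

Lemma sizeT : size T = n.
Proof. by rewrite /T size_mkseq. Qed.

Lemma aposk_lt k : k <= s * s -> apos M s k + 2 * k < n.
Proof.
move=> h; have := apos_le M s (ltac:(lia) : k.+1 <= (s * s).+1).
have := hn; rewrite /n0.
case: k h => [|k] h.
  rewrite /apos /base; nia.
have := apos_S M s (ltac:(lia) : 1 <= k.+1); lia.
Qed.

Lemma stA k : 1 <= k -> k <= s * s -> exists y, y \in S /\ apos M s k - 1 < y <= apos M s k.
Proof.
move=> k1 k2; have hk := aposk_lt k2.
have a1 : 1 <= apos M s k by rewrite /apos /base; nia.
have H : forall q, q < apos M s k - 1 -> ~ matchat T q (apos M s k - 1) 2.
  move=> q hq hm; apply: (noA s0 HM k1 k2 hq); split.
  - by have := hm 0 (ltac:(done)); rewrite !addn0 !nthT //; lia.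
  - have := hm 1 (ltac:(done)); rewrite !addn1 !nthT; try lia.
    by have -> : (apos M s k - 1).+1 = apos M s k by lia.
have hs : apos M s k - 1 + 1 < size T by rewrite sizeT; lia.
have [y [hy h]] := noocc_start (leqnn _) hs H.
exists y; split => //; lia.
Qed.

Lemma stB k : (forall t, t < size M -> nth 0 M t = 2 -> 0 < t) ->
  1 <= k -> k <= s * s -> exists y, y \in S /\ apos M s k < y <= apos M s k + k.
Proof.
move=> hB k1 k2; have hk := aposk_lt k2.
have H : forall q, q < apos M s k -> ~ matchat T q (apos M s k) k.+1.
  move=> q hq hm; apply: (noB s0 HM hB k1 k2 hq) => i hi.
  by have := hm i hi; rewrite !nthT //; lia.
have hs : apos M s k + k < size T by rewrite sizeT; lia.
have [y [hy h]] := noocc_start k1 hs H.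
by exists y.
Qed.

Lemma stC k : (forall t, t < size M -> nth 0 M t != 2) ->
  1 <= k -> k <= s * s -> exists y, y \in S /\ apos M s k + k < y <= apos M s k + k + k.
Proof.
move=> hC k1 k2; have hk := aposk_lt k2.
have H : forall q, q < apos M s k + k -> ~ matchat T q (apos M s k + k) k.+1.
  move=> q hq hm; apply: (noC s0 HM hC k1 k2 hq) => i hi.
  by have := hm i hi; rewrite !nthT //; lia.
have hs : apos M s k + k + k < size T by rewrite sizeT; lia.
have [y [hy h]] := noocc_start k1 hs H.
by exists y.
Qed.

Lemma cnt_span3 k : 1 <= k -> k <= s * s ->
  cnt S (apos M s k) (apos M s k.+1) =
  cnt S (apos M s k) (apos M s k + 1) + cnt S (apos M s k + 1) (apos M s k + k + 1)
  + cnt S (apos M s k + k + 1) (apos M s k.+1).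
Proof.
move=> k1 k2; have e := apos_S M s k1.
rewrite (@cnt_split _ _ (apos M s k + 1)); try lia.
rewrite (@cnt_split _ (apos M s k + 1) (apos M s k + k + 1)); try lia.
Qed.

Lemma cntA k : 1 <= k -> k <= s * s -> 1 <= cnt S (apos M s k) (apos M s k + 1).
Proof.
move=> k1 k2; have [y [hy h]] := stA k1 k2.
apply: cnt_mem hy _ _; lia.
Qed.

Lemma cntB k : (forall t, t < size M -> nth 0 M t = 2 -> 0 < t) ->
  1 <= k -> k <= s * s -> 1 <= cnt S (apos M s k + 1) (apos M s k + k + 1).
Proof.
move=> hB k1 k2; have [y [hy h]] := stB hB k1 k2.
apply: cnt_mem hy _ _; lia.
Qed.

Lemma cntC k : (forall t, t < size M -> nth 0 M t != 2) ->
  1 <= k -> k <= s * s -> 1 <= cnt S (apos M s k + k + 1) (apos M s k.+1).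
Proof.
move=> hC k1 k2; have [y [hy h]] := stC hC k1 k2.
have e := apos_S M s k1.
apply: cnt_mem hy _ _; lia.
Qed.

Lemma z_ge c : (forall k, 1 <= k -> k <= s * s -> c <= cnt S (apos M s k) (apos M s k.+1)) ->
  c * (s * s) <= zSSsr T.
Proof.
move=> h; rewrite /zSSsr sl_count -/S.
apply: leq_trans (cnt_size S (apos M s 1) (apos M s (s * s).+1)).
apply: lb_sum => // k; exact: apos_le.
Qed.

Lemma z_ge1 : s * s <= zSSsr T.
Proof.
rewrite -[s * s]mul1n; apply: z_ge => k k1 k2.
rewrite cnt_span3 //; have := cntA k1 k2; lia.
Qed.

Lemma z_ge2 : (forall t, t < size M -> nth 0 M t = 2 -> 0 < t) -> 2 * (s * s) <= zSSsr T.
Proof.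
move=> hB; apply: z_ge => k k1 k2.
rewrite cnt_span3 //; have := cntA k1 k2; have := cntB hB k1 k2; lia.
Qed.

Lemma z_ge3 : (forall t, t < size M -> nth 0 M t != 2) -> 3 * (s * s) <= zSSsr T.
Proof.
move=> hC; have hB : forall t, t < size M -> nth 0 M t = 2 -> 0 < t.
  by move=> t ht e; have := hC t ht; rewrite e.
apply: z_ge => k k1 k2.
rewrite cnt_span3 //; have := cntA k1 k2; have := cntB hB k1 k2; have := cntC hC k1 k2; lia.
Qed.
End LB.


Lemma seg_singles T p t : seg T p (p + t) t.
Proof.
elim: t p => [|t IH] p; first by rewrite addn0; apply: seg0.
apply: (segS (e := p.+1)) => //; first by left.
have -> : p + t.+1 = p.+1 + t by lia.
exact: IH.
Qed.

Lemma seg_one T p e : p < e -> valid T p e -> seg T p e 1.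
Proof. by move=> h v; apply: segS h v (seg0 _ _). Qed.

Lemma Ldiv s t u : t < s -> u < s -> (s * s - 1 - (t * s + u)) %/ s = s - 1 - t.
Proof.
move=> ht hu.
have -> : s * s - 1 - (t * s + u) = (s - 1 - t) * s + (s - 1 - u) by nia.
rewrite divnMDl ?divn_small; lia.
Qed.

Section UB.
Variables (s n : nat).
Hypothesis s2 : 2 <= s.
Let M := [:: 2].
Hypothesis hn : n0 M s <= n.
Let T := mkseq (chr M s) n.

Lemma nthT' i : i < n -> nth 0 T i = chr M s i.
Proof. by move=> h; rewrite /T nth_mkseq. Qed.

Lemma n0_ge : 2 * (s * s) + 1 < n0 M s.
Proof. rewrite /n0 /apos /base /=; nia. Qed.

Lemma segL t : t <= s -> seg T 0 (t * s) (2 * t).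
Proof.
elim: t => [|t IH] ht; first exact: seg0.
have hn0 := n0_ge.
rewrite mulSnr (_ : 2 * t.+1 = 2 * t + 2); last lia.
apply: seg_cat (IH (ltnW ht)) _.
have -> : 2 = 1 + 1 by [].
apply: (@seg_cat _ _ (t * s).+1); first by apply: seg_one => //; left.
apply: seg_one; first lia.
right; exists (t * s); split => // i hi.
rewrite !nthT'; try nia.
rewrite !chr_L; try nia.
rewrite /Lch addSnnS !Ldiv //; lia.
Qed.

Lemma segR : seg T (s * s + 1) (base M s) (s + 1).
Proof.
have hn0 := n0_ge.
apply: (@seg_cat _ _ (s * s + 1 + s)); first exact: seg_singles.
apply: seg_one; first by rewrite /base /=; nia.
right; exists (s * s + 1); split; first lia.
move=> i hi; rewrite /base /= in hi.
rewrite !nthT'; try nia.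
rewrite !chr_R /base /=; try nia.
have -> : s * s + 1 + s + i - s * s - 1 = s + i by lia.
by rewrite modnDl; congr (3 * (_ %% s) + 1); lia.
Qed.

Lemma segSpan k : 1 <= k -> k <= s * s -> seg T (apos M s k) (apos M s k.+1) 1.
Proof.
move=> k1 k2; have e := apos_S M s k1; have hn0 := n0_ge.
have hk : apos M s k.+1 <= n0 M s by apply: apos_le; lia.
apply: seg_one; first lia.
right; exists (s * s - k); split; first by rewrite /apos /base; nia.
move=> i hi.
rewrite !nthT'; try lia.
rewrite chr_span; try lia.
case: (ltngtP i k) => ik.
- rewrite chr_L; last lia.
  rewrite /Lch /spch ik; congr (3 * (_ %/ s)); lia.
- rewrite chr_R /base /=; try lia.
  rewrite /spch ifF; last lia.
  rewrite ifF; last by apply/negbTE; rewrite neq_ltn ik orbT.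
  congr (3 * (_ %% s) + 1); lia.
- subst i; rewrite chr_M /= ?spch_c; try lia.
  by rewrite (_ : s * s - k + k - s * s = 0) //; lia.
Qed.

Lemma segSpans K : K <= s * s -> seg T (apos M s 1) (apos M s K.+1) K.
Proof.
elim: K => [|K IH] hK; first exact: seg0.
suff h : seg T (apos M s 1) (apos M s K.+2) (K + 1) by rewrite addn1 in h.
apply: (@seg_cat _ _ (apos M s K.+1)); first exact: (IH (ltnW hK)).
by apply: segSpan; lia.
Qed.

Lemma segPad : exists m, m <= 2 /\ seg T (n0 M s) n m.
Proof.
case: (ltngtP n (n0 M s).+1) => h.
- exists 0; split => //; have -> : n = n0 M s by lia.
  exact: seg0.
- exists 2; split => //.
  apply: (@seg_cat _ _ (n0 M s).+1 _ 1 1); first by apply: seg_one => //; left.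
  apply: seg_one => //; right; exists (n0 M s); split => // i hi.
  by rewrite !nthT' ?chr_pad //; lia.
- by exists 1; split => //; rewrite h; apply: seg_one => //; left.
Qed.

Lemma z_ub : zSSsr T <= s * s + 3 * s + 4.
Proof.
have [m [hm sp]] := segPad.
apply: leq_trans (zSSsr_ub (m := 2 * s + 1 + (s + 1) + s * s + m) _) _; last lia.
rewrite /T size_mkseq.
apply: seg_cat _ sp.
have e1 : apos M s 1 = base M s by rewrite /apos; lia.
apply: (@seg_cat _ _ (apos M s 1)); last exact: segSpans (leqnn _).
rewrite e1; apply: (@seg_cat _ _ (s * s + 1)); last exact: segR.
apply: (@seg_cat _ _ (s * s)); first exact: segL (leqnn _).
by apply: seg_one; [lia | left; rewrite addn1].
Qed.
End UB.


Lemma ed_cons x s t : ed (x :: s) (x :: t) <= ed s t.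
Proof. by rewrite /= eqxx addn0 geq_minr. Qed.

Lemma ed_cat A u v : ed (A ++ u) (A ++ v) <= ed u v.
Proof. elim: A => //= x A IH; exact: leq_trans (ed_cons _ _ _) IH. Qed.

Lemma ed_refl s : ed s s = 0.
Proof. by apply/eqP; rewrite -leqn0; have := ed_cat s [::] [::]; rewrite !cats0. Qed.

Lemma ed_sub x y B : ed (x :: B) (y :: B) <= 1.
Proof. by rewrite /= ed_refl; apply: leq_trans (geq_minr _ _) _; case: (x != y). Qed.

Lemma ed_del x B : ed (x :: B) B <= 1.
Proof.
case: B => [|y B] //=.
apply: leq_trans (geq_minl _ _) _; apply: leq_trans (geq_minl _ _) _.
by have := ed_refl (y :: B) => /= ->.
Qed.

Lemma ed_ins x B : ed B (x :: B) <= 1.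
Proof.
case: B => [|y B] //=.
apply: leq_trans (geq_minl _ _) _; apply: leq_trans (geq_minr _ _) _.
by have := ed_refl (y :: B) => /= ->.
Qed.

Lemma ed_pos s t : s <> t -> 0 < ed s t.
Proof.
elim: s t => [|x s IH] [|y t] //=.
move=> h; rewrite !leq_min !ltnS !leq0n /=.
case: (eqVneq x y) => [e|]; last by rewrite addn1.
subst y; rewrite addn0; apply: IH => e; apply: h; congr cons; exact: e.
Qed.

Lemma eq_mkseq_in (f g : nat -> nat) n : (forall i, i < n -> f i = g i) -> mkseq f n = mkseq g n.
Proof.
move=> h; apply: (@eq_from_nth _ 0); rewrite !size_mkseq // => i hi.
by rewrite !nth_mkseq // h.
Qed.

Lemma mkseq_split (f : nat -> nat) n p : p <= n ->
  mkseq f n = mkseq f p ++ mkseq (fun i => f (p + i)) (n - p).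
Proof.
move=> hp; apply: (@eq_from_nth _ 0); first by rewrite size_cat !size_mkseq; lia.
move=> i; rewrite size_mkseq => hi; rewrite nth_mkseq // nth_cat size_mkseq.
case: ifP => h; first by rewrite nth_mkseq.
by rewrite nth_mkseq; [congr f|]; lia.
Qed.

Lemma mkseq_at (f : nat -> nat) n p : p < n ->
  mkseq f n = mkseq f p ++ f p :: mkseq (fun i => f (p.+1 + i)) (n - p.+1).
Proof.
move=> hp; rewrite (mkseq_split f (ltnW hp)); congr cat.
have -> : n - p = (n - p.+1).+1 by lia.
rewrite /mkseq -add1n iotaD /= addn0; congr cons.
rewrite (iotaDl 1 0) -map_comp; apply: eq_map => i /=; congr f; lia.
Qed.

Lemma ed_mk_sub (f g : nat -> nat) n p : p < n -> (forall i, i != p -> f i = g i) -> f p != g p ->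
  ed (mkseq f n) (mkseq g n) = 1.
Proof.
move=> hp h hne.
rewrite (mkseq_at f hp) (mkseq_at g hp).
rewrite (eq_mkseq_in (f := f) (g := g) (n := p)); last by move=> i hi; apply: h; rewrite neq_ltn hi.
rewrite (eq_mkseq_in (f := fun i => f (p.+1 + i)) (g := fun i => g (p.+1 + i))); last first.
  by move=> i _; apply: h; rewrite neq_ltn; apply/orP; right; lia.
apply/eqP; rewrite eqn_leq; apply/andP; split.
  exact: leq_trans (ed_cat _ _ _) (ed_sub _ _ _).
apply: ed_pos => e; move: (congr1 (fun s => nth 0 s p) e); rewrite !nth_cat size_mkseq ltnn subnn /=.
by move/eqP; rewrite (negbTE hne).
Qed.

Lemma ed_mk_del (f g : nat -> nat) n p : p < n -> (forall i, i < p -> f i = g i) ->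
  (forall i, p <= i -> g i = f i.+1) -> ed (mkseq f n) (mkseq g n.-1) = 1.
Proof.
move=> hp h1 h2.
rewrite (mkseq_at f hp) (mkseq_split g (ltac:(lia) : p <= n.-1)).
rewrite (eq_mkseq_in (f := f) (g := g) (n := p)) //.
rewrite (_ : n.-1 - p = n - p.+1); last lia.
rewrite (eq_mkseq_in (f := fun i => f (p.+1 + i)) (g := fun i => g (p + i))); last first.
  by move=> i _; rewrite h2; [congr f|]; lia.
apply/eqP; rewrite eqn_leq; apply/andP; split.
  exact: leq_trans (ed_cat _ _ _) (ed_del _ _).
apply: ed_pos => e; move: (congr1 size e); rewrite !size_cat /= !size_mkseq; lia.
Qed.

Lemma ed_mk_ins (f g : nat -> nat) n p : p <= n -> (forall i, i < p -> f i = g i) ->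
  (forall i, p <= i -> g i.+1 = f i) -> ed (mkseq f n) (mkseq g n.+1) = 1.
Proof.
move=> hp h1 h2.
rewrite (mkseq_split f hp) (mkseq_at g (ltac:(lia) : p < n.+1)).
rewrite (eq_mkseq_in (f := f) (g := g) (n := p)) //.
rewrite (_ : n.+1 - p.+1 = n - p); last lia.
rewrite (eq_mkseq_in (f := fun i => f (p + i)) (g := fun i => g (p.+1 + i))); last first.
  by move=> i _; rewrite -h2; [congr g|]; lia.
apply/eqP; rewrite eqn_leq; apply/andP; split.
  exact: leq_trans (ed_cat _ _ _) (ed_ins _ _).
apply: ed_pos => e; move: (congr1 size e); rewrite !size_cat /= !size_mkseq; lia.
Qed.

Lemma ed_T_sub s n : s * s < n -> ed (mkseq (chr [:: 2] s) n) (mkseq (chr [:: 5] s) n) = 1.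
Proof.
move=> h; apply: ed_mk_sub h _ _; last by rewrite /chr ltnn addn1 ltnSn subnn.
move=> i hi; rewrite /chr; case: ifP => // h1; rewrite /=; case: ifP => // h2.
by move/eqP: hi; lia.
Qed.

Lemma ed_T_del s n : s * s < n -> ed (mkseq (chr [:: 2] s) n) (mkseq (chr [::] s) n.-1) = 1.
Proof.
move=> h; apply: ed_mk_del h _ _.
  by move=> i hi; rewrite /chr hi.
move=> i hi; rewrite /chr /= ifF; last lia.
rewrite ifF; last lia.
rewrite ifF; last lia.
rewrite ifF; last lia.
congr tailch; lia.
Qed.

Lemma ed_T_ins s n : s * s <= n -> ed (mkseq (chr [:: 2] s) n) (mkseq (chr [:: 5; 2] s) n.+1) = 1.
Proof.
move=> h; apply: ed_mk_ins h _ _.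
  by move=> i hi; rewrite /chr hi.
move=> i hi; rewrite /chr /= [in RHS]ifF; last lia.
rewrite ifF; last lia.
case: (ltnP i (s * s + 1)) => h2.
  have ei : i = s * s by lia.
  rewrite ifT; last lia.
  rewrite ?ifT; try lia.
  by rewrite ei (_ : (s * s).+1 - s * s = 1) ?subnn //; lia.
rewrite ifF; last lia.
rewrite ?ifF; try lia.
congr tailch; lia.
Qed.


Lemma choose_s n : 256 * 256 <= n ->
  let s := Nat.sqrt (Nat.sqrt n) %/ 2 in
  8 <= s /\ n0 [:: 2] s <= n /\ n <= (9 * (s * s)) * (9 * (s * s)).
Proof.
move=> hn /=.
set u := Nat.sqrt n; set t := Nat.sqrt u; set s := t %/ 2.
have hu := Nat.sqrt_spec n (Nat.le_0_l _); rewrite -/u in hu.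
have ht := Nat.sqrt_spec u (Nat.le_0_l _); rewrite -/t in ht.
have hs : s * 2 <= t <= s * 2 + 1.
  have := divn_eq t 2; rewrite -/s; have := ltn_pmod t (isT : 0 < 2); lia.
have u256 : 256 <= u.
  case: (leqP 256 u) => // hh; exfalso; have : u.+1 * u.+1 <= 256 * 256 by apply: leq_mul.
  lia.
have t16 : 16 <= t.
  case: (leqP 16 t) => // hh; exfalso; have : t.+1 * t.+1 <= 16 * 16 by apply: leq_mul.
  lia.
have s8 : 8 <= s by lia.
split => //; split.
- rewrite /n0 /apos /base /=.
  set Q := s * s.
  have hQ : 64 <= Q by rewrite /Q; nia.
  have h1 : 4 * Q <= t * t by rewrite /Q; nia.
  have h2 : (4 * Q) * (4 * Q) <= (t * t) * (t * t) by apply: leq_mul.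
  have h3 : (t * t) * (t * t) <= u * u by apply: leq_mul; lia.
  have h4 : Q.+1 * Q.+1 <= 2 * (Q * Q) by nia.
  nia.
- set Q := s * s.
  have h1 : u.+1 <= t.+1 * t.+1 by lia.
  have h2 : t.+1 * t.+1 <= 9 * Q by rewrite /Q; nia.
  have h3 : u.+1 * u.+1 <= (9 * Q) * (9 * Q) by apply: leq_mul; lia.
  lia.
Qed.

Lemma Rle_nat a b : (a <= b)%N -> (INR a <= INR b)%R.
Proof. by move/leP; apply: le_INR. Qed.

Lemma INR_addn a b : INR (a + b)%N = (INR a + INR b)%R.
Proof. exact: plus_INR. Qed.

Lemma INR_muln a b : INR (a * b)%N = (INR a * INR b)%R.
Proof. exact: mult_INR. Qed.

Lemma INRk (k : nat) : INR k.+1 = (INR k + 1)%R.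
Proof. exact: S_INR. Qed.

Definition Tor s n := mkseq (chr [:: 2] s) n.
Definition Tsb s n := mkseq (chr [:: 5] s) n.
Definition Tdl s n := mkseq (chr [::] s) n.
Definition Tin s n := mkseq (chr [:: 5; 2] s) n.

Lemma n0_eq5 s : n0 [:: 5] s = n0 [:: 2] s. Proof. by []. Qed.
Lemma n0_eqd s : n0 [::] s = (n0 [:: 2] s).-1. Proof. rewrite /n0 /apos /base /=; nia. Qed.
Lemma n0_eqi s : n0 [:: 5; 2] s = (n0 [:: 2] s).+1. Proof. rewrite /n0 /apos /base /=; nia. Qed.
Lemma n0_gt s : 0 < s -> s * s < n0 [:: 2] s. Proof. rewrite /n0 /apos /base /=; nia. Qed.

Lemma facts s n : 2 <= s -> n0 [:: 2] s <= n ->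
  [/\ s * s <= zSSsr (Tor s n), zSSsr (Tor s n) <= s * s + 3 * s + 4,
      3 * (s * s) <= zSSsr (Tsb s n), 3 * (s * s) <= zSSsr (Tdl s n.-1)
    & 2 * (s * s) <= zSSsr (Tin s n.+1)].
Proof.
move=> s2 hn.
have s0 : 0 < s by lia.
split.
- exact: (z_ge1 s0 (isT : all (fun x => x %% 3 == 2) [:: 2]) hn).
- exact: z_ub.
- apply: (z_ge3 s0 (isT : all (fun x => x %% 3 == 2) [:: 5])); first by rewrite n0_eq5.
  by case.
- apply: (z_ge3 s0 (isT : all (fun x => x %% 3 == 2) [::])); first by rewrite n0_eqd; lia.
  by [].
- apply: (z_ge2 s0 (isT : all (fun x => x %% 3 == 2) [:: 5; 2])); first by rewrite n0_eqi.
  by case => [|[|]].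
Qed.


Lemma INR3 : INR 3 = 3%R. Proof. simpl; lra. Qed.
Lemma INR4 : INR 4 = 4%R. Proof. simpl; lra. Qed.
Lemma INR2 : INR 2 = 2%R. Proof. simpl; lra. Qed.
Lemma INR9 : INR 9 = 9%R. Proof. simpl; lra. Qed.

Lemma INR_p0 s : INR (s * s) = (INR s * INR s)%R.
Proof. by rewrite mult_INR. Qed.
Lemma INR_p1 s : INR (s * s + 3 * s + 4) = (INR s * INR s + 3 * INR s + 4)%R.
Proof. rewrite !plus_INR !mult_INR; simpl; lra. Qed.
Lemma INR_p3 s : INR (3 * (s * s)) = (3 * (INR s * INR s))%R.
Proof. rewrite !mult_INR; simpl; lra. Qed.
Lemma INR_p2 s : INR (2 * (s * s)) = (2 * (INR s * INR s))%R.
Proof. rewrite !mult_INR; simpl; lra. Qed.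
Lemma INR_p9 s : INR (9 * (s * s)) = (9 * (INR s * INR s))%R.
Proof. rewrite !mult_INR; simpl; lra. Qed.

Lemma rfacts s n : 2 <= s -> n0 [:: 2] s <= n ->
  let S := INR s in
  [/\ (S * S <= INR (zSSsr (Tor s n)))%R, (INR (zSSsr (Tor s n)) <= S * S + 3 * S + 4)%R,
      (3 * (S * S) <= INR (zSSsr (Tsb s n)))%R, (3 * (S * S) <= INR (zSSsr (Tdl s n.-1)))%R
    & (2 * (S * S) <= INR (zSSsr (Tin s n.+1)))%R].
Proof.
move=> s2 hn; cbv zeta; have [h1 h2 h3 h4 h5] := facts s2 hn.
split.
- by have := Rle_nat h1; rewrite INR_p0.
- by have := Rle_nat h2; rewrite INR_p1.
- by have := Rle_nat h3; rewrite INR_p3.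
- by have := Rle_nat h4; rewrite INR_p3.
- by have := Rle_nat h5; rewrite INR_p2.
Qed.

Lemma ratio_ge (a z z' : R) : (0 < z)%R -> (a * z <= z')%R -> (a <= z' / z)%R.
Proof.
move=> hz h; apply: (Rmult_le_reg_r z) => //.
by rewrite /Rdiv Rmult_assoc Rinv_l; [lra | lra].
Qed.

Lemma sqrt_ge (S z : R) : (0 <= S)%R -> (S * S <= z)%R -> (S <= sqrt z)%R.
Proof.
move=> h0 h; rewrite -(sqrt_square S h0); exact: sqrt_le_1_alt.
Qed.

Lemma archi_s (eps c : R) : (0 < eps)%R -> (0 < c)%R -> exists s : nat, (2 <= s)%N /\ (c <= eps * INR s)%R.
Proof.
move=> he hc.
have [N [hN hN0]] := archimed_cor1 (eps / c) (ltac:(apply: Rdiv_lt_0_compat; lra)).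
have pos : (0 < INR N)%R by apply: lt_0_INR.
exists (N + 2); split; first lia.
rewrite INR_addn INR2.
have : (1 < eps / c * INR N)%R.
  have := Rmult_lt_compat_r (INR N) _ _ pos hN; rewrite Rinv_l; lra.
move=> h; have : (c < eps * INR N)%R.
  have := Rmult_lt_compat_r c _ _ hc h.
  have -> : (eps / c * INR N * c = eps * INR N)%R by field; lra.
  lra.
nra.
Qed.

Lemma R_ratio3 eps S z z' : (0 < eps)%R -> (2 <= S)%R -> (21 <= eps * S)%R -> (S * S <= z)%R ->
  (z <= S * S + 3 * S + 4)%R -> (3 * (S * S) <= z')%R -> (3 - eps <= z' / z)%R.
Proof.
move=> he hS h21 hz1 hz2 hz'; apply: ratio_ge; first nra.
have h : (21 * S <= eps * S * S)%R by nra.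
case: (Rle_dec (3 - eps) 0) => c; first nra.
have : ((3 - eps) * z <= (3 - eps) * (S * S + 3 * S + 4))%R by apply: Rmult_le_compat_l; lra.
nra.
Qed.

Lemma R_ratio2 eps S z z' : (0 < eps)%R -> (2 <= S)%R -> (14 <= eps * S)%R -> (S * S <= z)%R ->
  (z <= S * S + 3 * S + 4)%R -> (2 * (S * S) <= z')%R -> (2 - eps <= z' / z)%R.
Proof.
move=> he hS h21 hz1 hz2 hz'; apply: ratio_ge; first nra.
have h : (14 * S <= eps * S * S)%R by nra.
case: (Rle_dec (2 - eps) 0) => c; first nra.
have : ((2 - eps) * z <= (2 - eps) * (S * S + 3 * S + 4))%R by apply: Rmult_le_compat_l; lra.
nra.
Qed.

Lemma R_add3 S z z' : (2 <= S)%R -> (S * S <= z)%R -> (z <= S * S + 3 * S + 4)%R ->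
  (3 * (S * S) <= z')%R -> (2 * z - 21 * sqrt z <= z' - z)%R.
Proof. move=> hS h1 h2 h3; have := sqrt_ge (ltac:(lra) : (0 <= S)%R) h1; lra. Qed.

Lemma R_add2 S z z' : (2 <= S)%R -> (S * S <= z)%R -> (z <= S * S + 3 * S + 4)%R ->
  (2 * (S * S) <= z')%R -> (z - 14 * sqrt z <= z' - z)%R.
Proof. move=> hS h1 h2 h3; have := sqrt_ge (ltac:(lra) : (0 <= S)%R) h1; lra. Qed.

Lemma R_om3 S z z' x : (8 <= S)%R -> (z <= S * S + 3 * S + 4)%R ->
  (3 * (S * S) <= z')%R -> (sqrt x <= 9 * (S * S))%R -> (1 / 18 * sqrt x <= z' - z)%R.
Proof. move=> hS h2 h3 hx; have : (8 * S <= S * S)%R by nra. lra. Qed.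

Lemma R_om2 S z z' x : (8 <= S)%R -> (z <= S * S + 3 * S + 4)%R ->
  (2 * (S * S) <= z')%R -> (sqrt x <= 9 * (S * S))%R -> (1 / 18 * sqrt x <= z' - z)%R.
Proof. move=> hS h2 h3 hx; have : (8 * S <= S * S)%R by nra. lra. Qed.

Lemma sqrt_n_le n s : n <= (9 * (s * s)) * (9 * (s * s)) -> (sqrt (INR n) <= 9 * (INR s * INR s))%R.
Proof.
move=> h; have := Rle_nat h; rewrite mult_INR INR_p9 => h'.
rewrite -(sqrt_square (9 * (INR s * INR s))); last by have := pos_INR s; nra.
exact: sqrt_le_1_alt.
Qed.


Theorem mainTheorem14 :
  (* ---------------- substitutions ---------------- *)
  (* liminf_n MS_sub(z_SSsr, n) >= 3 *)
  (forall eps : R, (0 < eps)%R -> exists N : nat, forall n : nat, (N <= n)%N ->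
     exists T T' : seq nat, size T = n /\ size T' = n /\ ed T T' = 1%N /\
       (3 - eps <= INR (zSSsr T') / INR (zSSsr T))%R) /\
  (* AS_sub >= 2 z - Theta(sqrt z), z = z_SSsr(T) arbitrarily large *)
  (exists c : R, (0 < c)%R /\ forall m : nat,
     exists T T' : seq nat, size T' = size T /\ ed T T' = 1%N /\ (m <= zSSsr T)%N /\
       (2 * INR (zSSsr T) - c * sqrt (INR (zSSsr T))
          <= INR (zSSsr T') - INR (zSSsr T))%R) /\
  (* AS_sub(z_SSsr, n) = Omega(sqrt n) *)
  (exists c : R, (0 < c)%R /\ exists N : nat, forall n : nat, (N <= n)%N ->
     exists T T' : seq nat, size T = n /\ size T' = n /\ ed T T' = 1%N /\
       (c * sqrt (INR n) <= INR (zSSsr T') - INR (zSSsr T))%R) /\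
  (* ---------------- insertions ---------------- *)
  (forall eps : R, (0 < eps)%R -> exists N : nat, forall n : nat, (N <= n)%N ->
     exists T T' : seq nat, size T = n /\ size T' = n.+1 /\ ed T T' = 1%N /\
       (2 - eps <= INR (zSSsr T') / INR (zSSsr T))%R) /\
  (exists c : R, (0 < c)%R /\ forall m : nat,
     exists T T' : seq nat, size T' = (size T).+1 /\ ed T T' = 1%N /\ (m <= zSSsr T)%N /\
       (INR (zSSsr T) - c * sqrt (INR (zSSsr T))
          <= INR (zSSsr T') - INR (zSSsr T))%R) /\
  (exists c : R, (0 < c)%R /\ exists N : nat, forall n : nat, (N <= n)%N ->
     exists T T' : seq nat, size T = n /\ size T' = n.+1 /\ ed T T' = 1%N /\
       (c * sqrt (INR n) <= INR (zSSsr T') - INR (zSSsr T))%R) /\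
  (* ---------------- deletions ---------------- *)
  (forall eps : R, (0 < eps)%R -> exists N : nat, forall n : nat, (N <= n)%N ->
     exists T T' : seq nat, size T = n /\ size T' = n.-1 /\ ed T T' = 1%N /\
       (3 - eps <= INR (zSSsr T') / INR (zSSsr T))%R) /\
  (exists c : R, (0 < c)%R /\ forall m : nat,
     exists T T' : seq nat, size T' = (size T).-1 /\ ed T T' = 1%N /\ (m <= zSSsr T)%N /\
       (2 * INR (zSSsr T) - c * sqrt (INR (zSSsr T))
          <= INR (zSSsr T') - INR (zSSsr T))%R) /\
  (exists c : R, (0 < c)%R /\ exists N : nat, forall n : nat, (N <= n)%N ->
     exists T T' : seq nat, size T = n /\ size T' = n.-1 /\ ed T T' = 1%N /\
       (c * sqrt (INR n) <= INR (zSSsr T') - INR (zSSsr T))%R).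
Proof.
have ge2 : forall m, (2 <= m + 2)%N by move=> m; lia.
have S2 : forall s, (2 <= s)%N -> (2 <= INR s)%R.
  by move=> s h; have := Rle_nat h; rewrite INR2.
have S8 : forall s, (8 <= s)%N -> (8 <= INR s)%R.
  by move=> s h; have := Rle_nat h; rewrite (_ : INR 8 = 8%R) //; simpl; lra.
have n0gt : forall s, (2 <= s)%N -> (s * s < n0 [:: 2] s)%N by move=> s h; apply: n0_gt; lia.
have mz : forall s n m, (2 <= s)%N -> (n0 [:: 2] s <= n)%N -> (m <= s)%N -> (m <= zSSsr (Tor s n))%N.
  move=> s n m h hn hm; have [h1 _ _ _ _] := facts h hn; nia.
split; [|split; [|split; [|split; [|split; [|split; [|split; [|split]]]]]]].
- move=> eps he; have [s [hs he']] := archi_s he (ltac:(lra) : (0 < 21)%R).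
  exists (n0 [:: 2] s) => n hn.
  exists (Tor s n), (Tsb s n); rewrite /Tor /Tsb !size_mkseq; split => //; split => //.
  split; first by apply: ed_T_sub; have := n0gt s hs; lia.
  have [h1 h2 h3 h4 h5] := rfacts hs hn.
  exact: R_ratio3 he (S2 s hs) he' h1 h2 h3.
- exists 21%R; split; first lra.
  move=> m; set s := m + 2; have hs := ge2 m.
  exists (Tor s (n0 [:: 2] s)), (Tsb s (n0 [:: 2] s)); rewrite /Tor /Tsb !size_mkseq.
  split => //; split; first by apply: ed_T_sub; have := n0gt s hs; lia.
  split; first by apply: mz => //; rewrite /s; lia.
  have [h1 h2 h3 h4 h5] := rfacts hs (leqnn _).
  exact: R_add3 (S2 s hs) h1 h2 h3.
- exists (1 / 18)%R; split; first lra.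
  exists (256 * 256) => n hn.
  have [hs8 [hn0 hsq]] := choose_s hn.
  set s := Nat.sqrt (Nat.sqrt n) %/ 2 in hs8 hn0 hsq.
  have hs : (2 <= s)%N by lia.
  exists (Tor s n), (Tsb s n); rewrite /Tor /Tsb !size_mkseq; split => //; split => //.
  split; first by apply: ed_T_sub; have := n0gt s hs; lia.
  have [h1 h2 h3 h4 h5] := rfacts hs hn0.
  exact: R_om3 (S8 s hs8) h2 h3 (sqrt_n_le hsq).
- move=> eps he; have [s [hs he']] := archi_s he (ltac:(lra) : (0 < 14)%R).
  exists (n0 [:: 2] s) => n hn.
  exists (Tor s n), (Tin s n.+1); rewrite /Tor /Tin !size_mkseq; split => //; split => //.
  split; first by apply: ed_T_ins; have := n0gt s hs; lia.
  have [h1 h2 h3 h4 h5] := rfacts hs hn.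
  exact: R_ratio2 he (S2 s hs) he' h1 h2 h5.
- exists 14%R; split; first lra.
  move=> m; set s := m + 2; have hs := ge2 m.
  exists (Tor s (n0 [:: 2] s)), (Tin s (n0 [:: 2] s).+1); rewrite /Tor /Tin !size_mkseq.
  split => //; split; first by apply: ed_T_ins; have := n0gt s hs; lia.
  split; first by apply: mz => //; rewrite /s; lia.
  have [h1 h2 h3 h4 h5] := rfacts hs (leqnn _).
  exact: R_add2 (S2 s hs) h1 h2 h5.
- exists (1 / 18)%R; split; first lra.
  exists (256 * 256) => n hn.
  have [hs8 [hn0 hsq]] := choose_s hn.
  set s := Nat.sqrt (Nat.sqrt n) %/ 2 in hs8 hn0 hsq.
  have hs : (2 <= s)%N by lia.
  exists (Tor s n), (Tin s n.+1); rewrite /Tor /Tin !size_mkseq; split => //; split => //.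
  split; first by apply: ed_T_ins; have := n0gt s hs; lia.
  have [h1 h2 h3 h4 h5] := rfacts hs hn0.
  exact: R_om2 (S8 s hs8) h2 h5 (sqrt_n_le hsq).
- move=> eps he; have [s [hs he']] := archi_s he (ltac:(lra) : (0 < 21)%R).
  exists (n0 [:: 2] s) => n hn.
  exists (Tor s n), (Tdl s n.-1); rewrite /Tor /Tdl !size_mkseq; split => //; split => //.
  split; first by apply: ed_T_del; have := n0gt s hs; lia.
  have [h1 h2 h3 h4 h5] := rfacts hs hn.
  exact: R_ratio3 he (S2 s hs) he' h1 h2 h4.
- exists 21%R; split; first lra.
  move=> m; set s := m + 2; have hs := ge2 m.
  exists (Tor s (n0 [:: 2] s)), (Tdl s (n0 [:: 2] s).-1); rewrite /Tor /Tdl !size_mkseq.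
  split => //; split; first by apply: ed_T_del; have := n0gt s hs; lia.
  split; first by apply: mz => //; rewrite /s; lia.
  have [h1 h2 h3 h4 h5] := rfacts hs (leqnn _).
  exact: R_add3 (S2 s hs) h1 h2 h4.
- exists (1 / 18)%R; split; first lra.
  exists (256 * 256) => n hn.
  have [hs8 [hn0 hsq]] := choose_s hn.
  set s := Nat.sqrt (Nat.sqrt n) %/ 2 in hs8 hn0 hsq.
  have hs : (2 <= s)%N by lia.
  exists (Tor s n), (Tdl s n.-1); rewrite /Tor /Tdl !size_mkseq; split => //; split => //.
  split; first by apply: ed_T_del; have := n0gt s hs; lia.
  have [h1 h2 h3 h4 h5] := rfacts hs hn0.
  exact: R_om3 (S8 s hs8) h2 h4 (sqrt_n_le hsq).
Qed.
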